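(* Consider an instance of Bin Packing with Usage Cost: items whose distinct sizes are the positive integers $w'_1,\dots,w'_{n'}$, with $q_d\ge 1$ items of size $w'_d$, and $m$ bins, bin $j$ having positive integer capacity $C_j$, fixed cost $f_j\ge 0$ and unit cost $c_j\ge0$; let $C_{\max}=\max_j C_j$. Let $z_2^*$ be the optimal value of the linear relaxation of the cutting-stock formulation and $z_3^*$ the optimal value of the linear relaxation of the arc-flow formulation, both defined below, and assume the former is feasible. Then $z_3^*\le z_2^*$. Cutting-stock relaxation: for each bin $j$, a pattern is an integer vector $g=(g_1,\dots,g_{n'})$ with $0\le g_d\le q_d$ and $\sum_d g_dw'_d\le C_j$; $I_j$ is the set of all patterns for bin $j$, and the $i$-th pattern of bin $j$ is $(g_{1ij},\dots,g_{n'ij})$, with cost $co_{ij}=f_j+c_j\sum_d g_{dij}w'_d$ if the pattern is nonzero and $co_{ij}=0$ if it is the zero vector. $z_2^*=\min\sum_{j=1}^m\sum_{i\in I_j}co_{ij}p_{ij}$ subject to $\sum_{j=1}^m\sum_{i\in I_j}g_{dij}p_{ij}=q_d$ for all $d$, $\sum_{i\in I_j}p_{ij}=1$ for all $j$, and $p_{ij}\ge 0$. Arc-flow relaxation: let $I$ be the set of arcs $(a,a+w'_d)$ with $a\ge 0$ integer, $d\in\{1,\dots,n'\}$ and $a+w'_d\le C_{\max}$, with a variable $x_{ab}\ge 0$ for each arc $(a,b)\in I$, and a variable $y_{aj}\in[0,1]$ for each bin $j$ and $a\in\{0,\dots,C_{\max}\}$ (representing an arc from node $a$ to a sink, for bin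 $j$), with cost $co_{aj}=f_j+a\,c_j$ for $a>0$ and $co_{0j}=0$. $z_3^*=\min\sum_{j=1}^m\sum_{a=0}^{C_{\max}}co_{aj}y_{aj}$ subject to: for every $b\in\{1,\dots,C_{\max}\}$, $\sum_{(a,b)\in I}x_{ab}-\sum_{(b,c)\in I}x_{bc}-\sum_{j=1}^m y_{bj}=0$; $-\sum_{(0,c)\in I}x_{0c}-\sum_{j=1}^m y_{0j}=-m$; $\sum_{a=0}^{C_j}y_{aj}=1$ for every $j$; $\sum_{(a,a+w'_d)\in I}x_{a,a+w'_d}=q_d$ for every $d$; and $y_{aj}=0$ for every $j$ and $a\in\{C_j+1,\dots,C_{\max}\}$.
   Context: Bin Packing with Usage Cost: each item must be assigned to exactly one bin, the total size $l_j$ of the items in bin $j$ may not exceed $C_j$, a bin is used if it contains at least one item, a used bin $j$ costs $f_j+c_jl_j$, and the total cost is to be minimised. Both formulations above are linear relaxations of exact integer formulations of this problem (with $p_{ij}\in\{0,1\}$, $x_{ab}\in\mathbb{N}$, $y_{aj}\in\{0,1\}$ respectively). *)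

(* Defs.v *)
From HB Require Import structures.
From mathcomp Require Import all_boot all_order all_algebra.
From mathcomp Require Import all_classical all_reals ereal.
Set Implicit Arguments. Unset Strict Implicit. Unset Printing Implicit Defensive.
Import Order.TTheory GRing.Theory Num.Theory.
Local Open Scope ring_scope.
Local Open Scope classical_set_scope.

Section BPUC.
Variables (R : realType) (n m : nat) (w q : 'I_n -> nat) (C : 'I_m -> nat)
          (f c : 'I_m -> R).

Definition Cmax : nat := (\max_(j < m) C j)%N.
(* upper bound for pattern entries, so that patterns form a finite type *)
Definition qmax : nat := (\max_(d < n) q d)%N.

Definition pat := {ffun 'I_n -> 'I_(qmax.+1)}.

Definition is_pattern (j : 'I_m) (g : pat) : bool :=
  [forall d, (g d <= q d)%N] && (\sum_(d < n) g d * w d <= C j)%N.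

Definition pat_cost (j : 'I_m) (g : pat) : R :=
  if [forall d, (g d : nat) == 0%N] then 0
  else f j + c j * (\sum_(d < n) g d * w d)%N%:R.

Definition cs_feasible (p : 'I_m -> pat -> R) : Prop :=
  (forall j g, is_pattern j g -> 0 <= p j g) /\
  (forall d : 'I_n,
     \sum_(j < m) \sum_(g : pat | is_pattern j g) (g d : nat)%:R * p j g
       = (q d)%:R) /\
  (forall j : 'I_m, \sum_(g : pat | is_pattern j g) p j g = 1).

Definition cs_obj (p : 'I_m -> pat -> R) : R :=
  \sum_(j < m) \sum_(g : pat | is_pattern j g) pat_cost j g * p j g.

Definition z2 : \bar R :=
  ereal_inf [set (cs_obj p)%:E | p in [set p | cs_feasible p]].

Definition node := 'I_(Cmax.+1).

(* (a,b) in I : b = a + w'_d for some d (and b <= C_max by typing) *)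
Definition is_arc (e : node * node) : bool :=
  [exists d : 'I_n, (e.2 : nat) == (e.1 + w d)%N].

Definition sink_cost (a : node) (j : 'I_m) : R :=
  if (a : nat) == 0%N then 0 else f j + (a : nat)%:R * c j.

Definition af_feasible (x : node * node -> R) (y : node -> 'I_m -> R) : Prop :=
  (forall e, is_arc e -> 0 <= x e) /\
  (forall a j, 0 <= y a j <= 1) /\
  (forall b : node, (0 < b)%N ->
     \sum_(e | is_arc e && ((e.2 : nat) == b)) x e
     - \sum_(e | is_arc e && ((e.1 : nat) == b)) x e
     - \sum_(j < m) y b j = 0) /\
  (forall b : node, (b : nat) = 0%N ->
     - \sum_(e | is_arc e && ((e.1 : nat) == 0%N)) x e
     - \sum_(j < m) y b j = - m%:R) /\
  (forall j : 'I_m, \sum_(a : node | (a <= C j)%N) y a j = 1) /\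
  (forall d : 'I_n,
     \sum_(e | is_arc e && ((e.2 : nat) == e.1 + w d)%N) x e = (q d)%:R) /\
  (forall (j : 'I_m) (a : node), (C j < a)%N -> y a j = 0).

Definition af_obj (y : node -> 'I_m -> R) : R :=
  \sum_(j < m) \sum_(a : node) sink_cost a j * y a j.

Definition z3 : \bar R :=
  ereal_inf [set (af_obj y)%:E | y in
     [set y | exists x, af_feasible x y]].

End BPUC.

(* Main.v *)
Require Import Defs.
From HB Require Import structures.
From mathcomp Require Import all_boot all_order all_algebra.
From mathcomp Require Import all_classical all_reals ereal.
From mathcomp Require Import zify ring.
Import Order.TTheory GRing.Theory Num.Theory.

Fixpoint edgesN (a : nat) (s : seq nat) : seq (nat * nat) :=
  if s is k :: s' then (a, a + k)%N :: edgesN (a + k) s' else [::].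

Lemma edgesN_mem a s u : u \in edgesN a s ->
  exists2 k, k \in s & ((u.2 = u.1 + k)%N /\ (a <= u.1)%N /\ (u.2 <= a + sumn s)%N).
Proof.
elim: s a => [|k s IH] a //=.
rewrite in_cons => /orP [/eqP -> | /IH [k' Hk' [h1 [h2 h3]]]].
  exists k; rewrite ?mem_head //=. split => //. split => //. by rewrite leq_add2l leq_addr.
exists k'; first by rewrite in_cons Hk' orbT.
split => //; split; [exact: leq_trans (leq_addr k a) h2 | by rewrite addnA].
Qed.

Lemma edgesN_tele a s b :
  (count (fun u => u.2 == b) (edgesN a s) + (a == b) =
   count (fun u => u.1 == b) (edgesN a s) + (a + sumn s == b))%N.
Proof.
elim: s a => [|k s IH] a /=; first by rewrite addn0.
have := IH (a + k)%N; rewrite addnA.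
case: (a + k == b)%N; case: (a == b); case: (a + k + sumn s == b)%N => /=; lia.
Qed.

Lemma edgesN_step a s k :
  count (fun u => u.2 == u.1 + k)%N (edgesN a s) = count (pred1 k) s.
Proof.
elim: s a => [|k' s IH] a //=.
by rewrite IH eqn_add2l.
Qed.

Lemma sum_count_mem (T : finType) (Q : pred T) (s : seq T) :
  (\sum_(e | Q e) count_mem e s)%N = count Q s.
Proof.
elim: s => [|x s IH] /=; first by rewrite big1.
rewrite big_split /= IH; congr (_ + _)%N.
case Qx: (Q x).
  rewrite (bigD1 x) //= eqxx big1 // => e /andP [_ /negbTE].
  by rewrite eq_sym => ->.
rewrite big1 // => e Qe; case: eqP => // xe; by rewrite xe Qe in Qx.
Qed.
Section Main.
Local Open Scope ring_scope.
Variables (R : realType) (n m : nat) (w q : 'I_n -> nat) (C : 'I_m -> nat)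
          (f c : 'I_m -> R).
Hypothesis hw : forall d, (0 < w d)%N.
Hypothesis hinj : injective w.
Variable p : 'I_m -> pat q -> R.
Hypothesis hp : cs_feasible w C p.

Let P := @is_pattern n m w q C.

Definition steps (g : pat q) : seq nat :=
  flatten [seq nseq (g d : nat) (w d) | d <- index_enum 'I_n].
Definition load (g : pat q) : nat := (\sum_(d < n) g d * w d)%N.

Lemma sumn_steps g : sumn (steps g) = load g.
Proof.
rewrite /steps sumn_flatten -map_comp sumnE big_map.
by apply: eq_bigr => d _; rewrite /= sumn_nseq mulnC.
Qed.

Lemma count_steps g d : count (pred1 (w d)) (steps g) = g d.
Proof.
rewrite /steps count_flatten -map_comp sumnE big_map.
rewrite (bigD1 d) //= count_nseq /= eqxx mul1n big1 ?addn0 // => d' /negbTE dd'.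
rewrite count_nseq /=; case: eqP => [/hinj e|]; last by rewrite mul0n.
by rewrite e eqxx in dd'.
Qed.

Lemma mem_steps g k : k \in steps g -> exists d, k = w d.
Proof.
by move=> /flatten_mapP [d _]; rewrite mem_nseq => /andP [_ /eqP ->]; exists d.
Qed.

Lemma load_le j g : P j g -> (load g <= Cmax C)%N.
Proof.
move=> /andP [_ h]; apply: leq_trans h _.
exact: (leq_bigmax (F := C) j).
Qed.

Lemma load_leC j g : P j g -> (load g <= C j)%N.
Proof. by move=> /andP []. Qed.

Definition E g := edgesN 0 (steps g).
Definition toN (u : nat * nat) : node C * node C := (inord u.1, inord u.2).
Definition En g := map toN (E g).

Lemma E_good j g u : P j g -> u \in E g ->
  [/\ (toN u).1 = u.1 :> nat, (toN u).2 = u.2 :> nat, is_arc w (toN u)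
    & 0 < u.2]%N.
Proof.
move=> Pg /edgesN_mem [k /mem_steps [d ->] [h1 [_ h3]]].
rewrite add0n sumn_steps in h3.
have hb := leq_trans h3 (@load_le j g Pg).
have h2 : (u.2 < (Cmax C).+1)%N by [].
have h1' : (u.1 < (Cmax C).+1)%N.
  by apply: leq_ltn_trans h2; rewrite h1 leq_addr.
rewrite /= !inordK //; split => //.
  by apply/existsP; exists d; rewrite /= !inordK // h1.
by rewrite h1 (leq_trans (hw d)) // leq_addl.
Qed.

Lemma cnt_gen j g (Q' : nat -> nat -> bool) : P j g ->
  count (fun e : node C * node C => is_arc w e && Q' e.1 e.2) (En g)
  = count (fun u => Q' u.1 u.2) (E g).
Proof.
move=> Pg; rewrite count_map; apply: eq_in_count => u /(@E_good j g u Pg) [h1 h2 ha _].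
by rewrite /= ha; congr (Q' _ _).
Qed.

Definition X (e : node C * node C) : R :=
  \sum_(j < m) \sum_(g | P j g) p j g * (count_mem e (En g))%:R.

Lemma sumX (Q : pred (node C * node C)) :
  \sum_(e | Q e) X e =
  \sum_(j < m) \sum_(g | P j g) p j g * (count Q (En g))%:R.
Proof.
rewrite /X exchange_big; apply: eq_bigr => j _.
rewrite exchange_big; apply: eq_bigr => g _.
by rewrite -mulr_sumr -natr_sum sum_count_mem.
Qed.

Definition Y (a : node C) (j : 'I_m) : R :=
  \sum_(g | P j g && (load g == a)) p j g.

Lemma Yexp a j : Y a j = \sum_(g | P j g) p j g * (load g == a)%:R.
Proof.
rewrite /Y big_mkcondr; apply: eq_bigr => g _.
by case: (load g == a); rewrite ?mulr1 ?mulr0.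
Qed.

Lemma sumY j (F : node C -> R) :
  \sum_(a : node C) F a * Y a j =
  \sum_(g | P j g) F (inord (load g)) * p j g.
Proof.
rewrite (partition_big (fun g => inord (load g) : node C) xpredT) //=.
apply: eq_bigr => a _; rewrite /Y mulr_sumr.
apply: eq_big => g.
  case Pg: (P j g) => //=.
  have hb : (load g < (Cmax C).+1)%N by rewrite ltnS (@load_le j g Pg).
  apply/eqP/eqP => [h|<-]; last by rewrite inordK.
  by apply: val_inj; rewrite /= inordK -?h.
case/andP => Pg /eqP ha.
by rewrite ha inord_val.
Qed.

Lemma tele j g (b : nat) : P j g ->
  (count (fun u => u.2 == b) (E g) + (0 == b) =
   count (fun u => u.1 == b) (E g) + (load g == b))%N.
Proof. by move=> Pg; rewrite /E edgesN_tele add0n sumn_steps. Qed.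

Lemma cin0 j g : P j g -> count (fun u => u.2 == 0)%N (E g) = 0%N.
Proof.
move=> Pg; rewrite (@eq_in_count _ _ pred0) ?count_pred0 // => u.
by move=> /(@E_good j g u Pg) [_ _ _ h]; rewrite /= eqn0Ngt h.
Qed.

Lemma citem j g d : P j g ->
  count (fun u => u.2 == u.1 + w d)%N (E g) = g d.
Proof. by move=> Pg; rewrite /E edgesN_step count_steps. Qed.

Lemma feas : af_feasible w q X Y.
Proof.
case: hp => hpos [hq h1].
split; [|split; [|split; [|split; [|split; [|split]]]]].
- move=> e _; apply: sumr_ge0 => j _; apply: sumr_ge0 => g Pg.
  by apply: mulr_ge0; [exact: hpos|exact: ler0n].
- move=> a j; apply/andP; split.
    by apply: sumr_ge0 => g /andP [Pg _]; exact: hpos.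
  rewrite Yexp -[X in _ <= X](h1 j); apply: ler_sum => g Pg.
  by case: (_ == _); rewrite ?mulr1 ?mulr0 //; exact: hpos.
- move=> b b0.
  rewrite !sumX.
  rewrite (eq_bigr _ (fun j _ => Yexp b j)).
  rewrite -!sumrB; apply: big1 => j _.
  rewrite -!sumrB; apply: big1 => g Pg.
  rewrite (@cnt_gen j g (fun _ y => y == b)) //.
  rewrite (@cnt_gen j g (fun y _ => y == b)) //.
  have := @tele j g b Pg; rewrite eq_sym (negbTE (lt0n_neq0 b0)) addn0 => ->.
  rewrite natrD; ring.
- move=> b b0.
  rewrite sumX (eq_bigr _ (fun j _ => Yexp b j)) b0.
  rewrite -opprD; congr (- _).
  rewrite -big_split /=.
  rewrite (eq_bigr (fun _ => 1)); first by rewrite sumr_const card_ord.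
  move=> j _; rewrite -big_split /=.
  transitivity (\sum_(g | P j g) p j g); last exact: h1.
  apply: eq_bigr => g Pg.
  rewrite -mulrDr (@cnt_gen j g (fun y _ => y == 0)) //.
  have := @tele j g 0 Pg; rewrite (@cin0 j g Pg) /= => HH.
  by rewrite -natrD -HH mulr1.
- move=> j.
  transitivity (\sum_(a : node C) ((a <= C j)%N)%:R * Y a j).
    rewrite big_mkcond; apply: eq_bigr => a _.
    by case: ifP; rewrite ?mul1r ?mul0r.
  rewrite sumY; transitivity (\sum_(g | P j g) p j g); last exact: h1.
  apply: eq_bigr => g Pg.
  have hb : (load g < (Cmax C).+1)%N by rewrite ltnS (@load_le j g Pg).
  by rewrite inordK // (@load_leC j g Pg) mul1r.
- move=> d; rewrite sumX -(hq d).
  apply: eq_bigr => j _; apply: eq_bigr => g Pg.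
  by rewrite (@cnt_gen j g (fun x y => y == x + w d)%N) // (@citem j g d Pg) mulrC.
- move=> j a ha; rewrite /Y big_pred0 // => g.
  apply/andP => [[Pg /eqP hl]]; have := @load_leC j g Pg.
  by rewrite hl leqNgt ha.
Qed.

Lemma obj : af_obj f c Y = cs_obj w C f c p.
Proof.
apply: eq_bigr => j _; rewrite (sumY j (fun a => sink_cost f c a j)).
apply: eq_bigr => g Pg; congr (_ * _).
have hb : (load g < (Cmax C).+1)%N by rewrite ltnS (@load_le j g Pg).
rewrite /sink_cost /pat_cost inordK //.
have -> : [forall d, (g d : nat) == 0%N] = (load g == 0%N).
  rewrite /load sum_nat_eq0; apply: eq_forallb => d /=.
  by rewrite muln_eq0 (negbTE (lt0n_neq0 (hw d))) orbF.
by case: (load g == 0%N) => //; rewrite mulrC.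
Qed.
End Main.

Local Open Scope ring_scope.

Theorem proposition3 (R : realType) (n m : nat) (w q : 'I_n -> nat)
    (C : 'I_m -> nat) (f c : 'I_m -> R) :
  (forall d, (0 < w d)%N) ->
  injective w ->
  (forall d, (1 <= q d)%N) ->
  (forall j, (0 < C j)%N) ->
  (forall j, 0 <= f j) ->
  (forall j, 0 <= c j) ->
  (exists p, @cs_feasible R n m w q C p) ->
  (@z3 R n m w q C f c <= @z2 R n m w q C f c)%E.
Proof.
move=> hw hinj _ _ _ _ _.
apply/ereal_infP => _ [p hp <-].
apply: ge_ereal_inf.
exists (af_obj f c (@Y R n m w q C p))%:E; last by rewrite (@obj R n m w q C f c hw p).
exists (@Y R n m w q C p) => //.
by exists (@X R n m w q C p); exact: feas.
Qed.
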